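(* ($q$-Genocchi triangle) Let $q$ be a nonzero real number with $q\neq-1$. Define numbers $b(m,k)=b(m,k,q)$ as follows: $b(0,1)=1$; $b(2n+1,0)=0$ for all $n\ge0$; $b(2n,n+1)=0$ for all $n\ge1$; for $n\ge0$ and $1\le k\le n+1$, $$b(2n+1,k)=q^{2k-2}b(2n+1,k-1)+(1+q^{2k-1})b(2n,k);$$ and for $n\ge1$ and $1\le k\le n$, $$b(2n,k)=q^{1-2k}\big(b(2n,k+1)+(1+q^{2k})b(2n-1,k)\big).$$ (In particular $b(1,1)=1+q$.) Then for every $n\ge1$, $$b(2n-1,n)=\lambda\big((-1)^{n-1}U_{2n-1}(1,s,q)\big)=(-q;q)_{2n-1}\,G_{2n}(q).$$
   Context: $U_{-1}=0$, $U_0=1$, $U_n(x,s,q)=(1+q^{n})x\,U_{n-1}(x,s,q)+q^{n-1}s\,U_{n-2}(x,s,q)$ for $n\ge1$. Since $U_{2n}(1,s,q)$ is a polynomial in $s$ of degree $n$, the polynomials $U_{2n}(1,s,q)$, $n\ge0$, form a basis of the polynomials in $s$; $\lambda$ is the linear functional on polynomials in $s$ with $\lambda(U_{2n}(1,s,q))=[n=0]$. Notation: $[m]=1+q+\cdots+q^{m-1}$, $[m]!=[1]\cdots[m]$; $(-q;q)_m=(1+q)(1+q^2)\cdots(1+q^m)$. With $e(z)=\sum_{m\ge0}z^m/[m]!$, the $q$-Genocchi numbers $G_{2m}(q)$, $m\ge1$, are defined by $z\frac{e(z)-e(-z)}{e(z)+e(-z)}=\sum_{m\ge1}\frac{(-1)^{m-1}G_{2m}(q)(-q;q)_{2m-1}}{[2m]!}z^{2m}$.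 *)

(* Defs.v *)
From HB Require Import structures.
From mathcomp Require Import all_boot all_order all_algebra.
Set Implicit Arguments. Unset Strict Implicit. Unset Printing Implicit Defensive.
Import Order.TTheory GRing.Theory Num.Theory.
Local Open Scope ring_scope.

(* Formal power series in z are coefficient sequences nat -> R;
   polynomials in s are {poly R} (s = 'X). *)

Definition qint (R : nzRingType) (q : R) (m : nat) : R := \sum_(i < m) q ^+ i.
Definition qfact (R : nzRingType) (q : R) (m : nat) : R :=
  \prod_(1 <= i < m.+1) qint q i.
Definition qpochneg (R : nzRingType) (q : R) (m : nat) : R :=
  \prod_(1 <= i < m.+1) (1 + q ^+ i).

(* coefficients of e(z) + e(-z), where e(z) = sum_m z^m/[m]! *)
Definition genD (R : fieldType) (q : R) (n : nat) : R :=
  (1 + (-1) ^+ n) / qfact q n.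
(* coefficients of z (e(z) - e(-z)) *)
Definition genN (R : fieldType) (q : R) (n : nat) : R :=
  match n with
  | 0 => 0
  | n'.+1 => (1 - (-1) ^+ n') / qfact q n'
  end.

(* formal power series division N/D (D 0 invertible): the first n
   coefficients of the quotient F, determined by F * D = N *)
Fixpoint fps_div_seq (R : fieldType) (N D : nat -> R) (n : nat) : seq R :=
  match n with
  | 0 => [::]
  | n'.+1 =>
      let s := fps_div_seq N D n' in
      rcons s ((N n' - \sum_(i < n') s`_i * D (n' - i)%N) / D 0%N)
  end.
Definition fps_div (R : fieldType) (N D : nat -> R) (n : nat) : R :=
  (fps_div_seq N D n.+1)`_n.

(* q-Genocchi number G_{2m}(q): the coefficient of z^{2m} in
   z (e(z)-e(-z))/(e(z)+e(-z)) equals (-1)^(m-1) G_{2m} (-q;q)_{2m-1} / [2m]! *)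
Definition qGenocchi (R : fieldType) (q : R) (m : nat) : R :=
  (-1) ^+ (m.-1) * fps_div (genN q) (genD q) (2 * m) * qfact q (2 * m)
  / qpochneg q (2 * m).-1.

(* (U_{n-1}, U_n) as polynomials in s, for fixed x, q *)
Fixpoint Upair (R : nzRingType) (x q : R) (n : nat) : {poly R} * {poly R} :=
  match n with
  | 0 => (0, 1)
  | n'.+1 =>
      let: (a, b) := Upair x q n' in
      (b, ((1 + q ^+ n'.+1) * x)%:P * b + (q ^+ n')%:P * 'X * a)
  end.
Definition U (R : nzRingType) (x q : R) (n : nat) : {poly R} := (Upair x q n).2.

Definition lambda_spec (R : nzRingType) (q : R) (L : {poly R} -> R) : Prop :=
  (forall (a : R) (p r : {poly R}), L (a *: p + r) = a * L p + L r) /\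
  (forall n : nat, L (U 1 q (2 * n)) = (n == 0%N)%:R).

(* Main.v *)
Require Import Defs.
From HB Require Import structures.
From mathcomp Require Import all_boot all_order all_algebra.
From mathcomp Require Import ring lra zify.
Import Order.TTheory GRing.Theory Num.Theory.
Local Open Scope ring_scope.

Section Basics.
Variable R : realFieldType.
Variable q : R.
Hypothesis q0 : q != 0.
Hypothesis qm1 : q != -1.

Lemma qint0 : qint q 0 = 0.
Proof. by rewrite /qint big_ord0. Qed.

Lemma qintS n : qint q n.+1 = qint q n + q ^+ n.
Proof. by rewrite /qint big_ord_recr. Qed.

Lemma qintS' n : qint q n.+1 = 1 + q * qint q n.
Proof.
rewrite /qint big_ord_recl expr0 mulr_sumr; congr (_ + _).
by apply: eq_bigr => i _; rewrite exprS.
Qed.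

Lemma qint1 : qint q 1 = 1.
Proof. by rewrite qintS' qint0 mulr0 addr0. Qed.

Lemma qintD a b : qint q (a + b) = qint q a + q ^+ a * qint q b.
Proof.
elim: b => [|b IH]; first by rewrite addn0 qint0 mulr0 addr0.
by rewrite addnS !qintS IH exprD; ring.
Qed.

Lemma qpow_qint n : q ^+ n = 1 - (1 - q) * qint q n.
Proof.
elim: n => [|n IH]; first by rewrite qint0 expr0; ring.
by rewrite qintS exprS IH; ring.
Qed.

Lemma norm1_cases (x : R) : `|x| = 1 -> x = 1 \/ x = -1.
Proof.
case: (lerP 0 x) => h.
  by rewrite ger0_norm // => ->; left.
by rewrite ltr0_norm // => /eqP; rewrite eqr_oppLR => /eqP ->; right.
Qed.

Lemma pow_abs1 n (c : R) : (0 < n)%N -> q ^+ n = c -> `|c| = 1 -> q = 1 \/ q = -1.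
Proof.
move=> n0 hc c1; apply: norm1_cases.
have : `|q| ^+ n == 1 by rewrite -normrX hc c1.
by rewrite pexpr_eq1 // => /eqP.
Qed.

Lemma qint_neq0 n : (0 < n)%N -> qint q n != 0.
Proof.
move=> n0; apply/negP => /eqP h.
have := qpow_qint n; rewrite h mulr0 subr0 => e.
have [e1|e1] := (@pow_abs1 n 1 n0 e (normr1 _)).
  suff : qint q n = n%:R by rewrite h => /esym/eqP; rewrite pnatr_eq0; lia.
  elim: (n) => [|m IH]; first by rewrite qint0.
  by rewrite qintS IH e1 expr1n -natr1.
by move: qm1; rewrite e1 eqxx.
Qed.

Lemma qfactS n : qfact q n.+1 = qfact q n * qint q n.+1.
Proof. by rewrite /qfact big_nat_recr. Qed.

Lemma qfact0 : qfact q 0 = 1.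
Proof. by rewrite /qfact big_geq. Qed.

Lemma qfact_neq0 n : qfact q n != 0.
Proof.
elim: n => [|n IH]; first by rewrite qfact0 oner_eq0.
by rewrite qfactS mulf_neq0 // qint_neq0.
Qed.

Lemma onepow_neq0 i : 1 + q ^+ i != 0.
Proof.
apply/negP => /eqP h.
have e : q ^+ i = -1 by apply/eqP; rewrite -subr_eq0 opprK addrC h.
case: i h e => [|i] h e.
  by move: e; rewrite expr0 => /eqP; rewrite -subr_eq0 opprK -(natrD _ 1 1) pnatr_eq0.
have [e1|e1] := (@pow_abs1 i.+1 (-1) isT e (normrN1 _)).
  by move: h; rewrite e1 expr1n -(natrD _ 1 1) => /eqP; rewrite pnatr_eq0.
by move: qm1; rewrite e1 eqxx.
Qed.

Lemma qpochneg_neq0 n : qpochneg q n != 0.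
Proof.
rewrite /qpochneg; elim: n => [|n IH]; first by rewrite big_geq // oner_eq0.
by rewrite big_nat_recr //= mulf_neq0 // onepow_neq0.
Qed.


Definition qbin (n k : nat) : R :=
  if (k <= n)%N then qfact q n / (qfact q k * qfact q (n - k)) else 0.

Lemma qbin_gt n k : (n < k)%N -> qbin n k = 0.
Proof. by move=> h; rewrite /qbin leqNgt h. Qed.

Lemma qbin_n0 n : qbin n 0 = 1.
Proof. by rewrite /qbin leq0n subn0 qfact0 mul1r divff // qfact_neq0. Qed.

Lemma qbin_nn n : qbin n n = 1.
Proof. by rewrite /qbin leqnn subnn qfact0 mulr1 divff // qfact_neq0. Qed.

Lemma qbin_n1 n : qbin n 1 = qint q n.
Proof.
case: n => [|n]; first by rewrite qbin_gt // qint0.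
rewrite /qbin /= subn1 /= (qfactS n) (qfactS 0) qfact0 qint1 !mul1r.
by field; rewrite qfact_neq0.
Qed.

Lemma qbin_pascal n k : qbin n.+1 k.+1 = qbin n k + q ^+ k.+1 * qbin n k.+1.
Proof.
case: (ltngtP k n) => hk.
- have [d ->] : exists d, (n = k.+1 + d)%N by exists (n - k.+1)%N; lia.
  rewrite /qbin.
  have -> : (k.+1 <= (k.+1 + d).+1)%N by lia.
  have -> : (k <= k.+1 + d)%N by lia.
  have -> : (k.+1 <= k.+1 + d)%N by lia.
  have -> : ((k.+1 + d).+1 - k.+1 = d.+1)%N by lia.
  have -> : ((k.+1 + d) - k = d.+1)%N by lia.
  have -> : ((k.+1 + d) - k.+1 = d)%N by lia.
  have e : qint q (k.+1 + d).+1 = qint q k.+1 + q ^+ k.+1 * qint q d.+1.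
    by rewrite -qintD addnS.
  rewrite !qfactS e.
  field.
  by rewrite ?mulf_neq0 ?qfact_neq0 ?qint_neq0.
- by rewrite !qbin_gt // ?mulr0 ?addr0 //; lia.
- by rewrite hk !qbin_nn qbin_gt // mulr0 addr0.
Qed.

Lemma qbin_mul n k i : (i <= k)%N -> (k <= n)%N ->
  qbin n k * qbin k i = qbin n i * qbin (n - i) (k - i).
Proof.
move=> hik hkn.
have [a ek] : exists a, (k = i + a)%N by exists (k - i)%N; lia.
have [d en] : exists d, (n = i + a + d)%N by exists (n - k)%N; lia.
subst k n.
rewrite /qbin.
have -> : (i + a <= i + a + d)%N by lia.
have -> : (i <= i + a)%N by lia.
have -> : (i <= i + a + d)%N by lia.
have -> : (i + a - i <= i + a + d - i)%N by lia.
have -> : (i + a + d - (i + a) = d)%N by lia.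
have -> : (i + a - i = a)%N by lia.
have -> : (i + a + d - i = a + d)%N by lia.
have -> : (a + d - a = d)%N by lia.
field.
by rewrite !qfact_neq0.
Qed.

Definition cc (m k : nat) : R := qbin m k * q ^+ 'C(m - k, 2).

Lemma binS2 n : 'C(n.+1, 2) = ('C(n, 2) + n)%N.
Proof. by rewrite binS bin1. Qed.

Lemma coef_id_big j a :
  qbin (j + a.+2).+2 j.+2 * q ^+ 'C(a.+2, 2) =
  (1 + q ^+ (j + a.+2).+1) * (qbin (j + a.+2).+1 j.+2 * q ^+ 'C(a.+1, 2))
  + qbin (j + a.+2) j * q ^+ 'C(a.+3, 2)
  - qbin (j + a.+2) j.+2 * q ^+ 'C(a.+1, 2).
Proof.
rewrite /qbin.
have -> : (j.+2 <= (j + a.+2).+2)%N by lia.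
have -> : (j.+2 <= (j + a.+2).+1)%N by lia.
have -> : (j <= (j + a.+2))%N by lia.
have -> : (j.+2 <= (j + a.+2))%N by lia.
have -> : ((j + a.+2).+2 - j.+2 = a.+2)%N by lia.
have -> : ((j + a.+2).+1 - j.+2 = a.+1)%N by lia.
have -> : ((j + a.+2) - j = a.+2)%N by lia.
have -> : ((j + a.+2) - j.+2 = a)%N by lia.
rewrite !binS2 !exprD.
have e1 : qint q (j + a.+2).+1 = qint q a + q ^+ a * qint q j.+3.
  by rewrite -qintD; congr qint; lia.
have e2 : qint q (j + a.+2).+2 = qint q a + q ^+ a * qint q j.+4.
  by rewrite -qintD; congr qint; lia.
have e3 : q ^+ (j + a.+2).+1 = q ^+ j * q ^+ a * q ^+ 3.
  by rewrite -!exprD; congr (_ ^+ _); lia.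
rewrite !qfactS e1 e2 e3 !qintS' !exprS (qpow_qint j) (qpow_qint a).
move: (q ^+ 'C(a, 2)) => Z.
field.
by rewrite -!qintS' !qint_neq0 // !qfact_neq0.
Qed.

Lemma qbin_Sn n : qbin n.+1 n = qint q n.+1.
Proof.
rewrite /qbin leqnSn.
have -> : (n.+1 - n = 1)%N by lia.
rewrite qfactS (qfactS 0) qfact0 qint1 !mul1r mulr1.
by field; rewrite qfact_neq0.
Qed.

Lemma coef_id m k : (k <= m.+2)%N ->
  cc m.+2 k = (1 + q ^+ m.+1) * cc m.+1 k
    + (if (2 <= k)%N then qbin m (k - 2) * q ^+ 'C(m.+3 - k, 2) else 0)
    - qbin m k * q ^+ 'C(m.+1 - k, 2).
Proof.
rewrite /cc; case: k => [|[|j]] hk /=.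
- rewrite !qbin_n0 !subn0 !binS2 !exprD !exprS.
  by move: (q ^+ 'C(m, 2)) (q ^+ m) => Z X; ring.
- rewrite !qbin_n1 !subSS !subn0.
  case: m hk => [|m] hk.
    by rewrite (_ : 'C(1,2) = 0)%N // (_ : 'C(0,2) = 0)%N // !qintS' qint0; ring.
  rewrite !binS2 !exprD !qintS !exprS.
  rewrite (qpow_qint m); move: (q ^+ 'C(m, 2)) (qint q m) => Z Q; ring.
- have [->|[->|[a ->]]] : m = j \/ m = j.+1 \/ exists a, m = (j + a.+2)%N.
    case: (ltngtP m j.+1) => h; [left; lia | right; right; exists (m - j.+2)%N; lia | by right; left].
  + have -> : (j.+2 - j.+2 = 0)%N by lia.
    have -> : (j.+1 - j.+2 = 0)%N by lia.
    have -> : (j.+3 - j.+2 = 1)%N by lia.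
    have -> : (j.+2 - 2 = j)%N by lia.
    rewrite !qbin_nn !qbin_gt //.
    by rewrite (_ : 'C(1,2) = 0)%N // (_ : 'C(0,2) = 0)%N //; ring.
  + have -> : (j.+3 - j.+2 = 1)%N by lia.
    have -> : (j.+2 - j.+2 = 0)%N by lia.
    have -> : (j.+4 - j.+2 = 2)%N by lia.
    have -> : (j.+2 - 2 = j)%N by lia.
    rewrite !qbin_nn qbin_Sn qbin_Sn (@qbin_gt j.+1 j.+2) //.
    rewrite (_ : 'C(1,2) = 0)%N // (_ : 'C(0,2) = 0)%N // (_ : 'C(2,2) = 1)%N //.
    rewrite !qintS' exprS (qpow_qint j.+1) qintS'.
    by move: (qint q j) => Q; ring.
  + have -> : ((j + a.+2).+2 - j.+2 = a.+2)%N by lia.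
    have -> : ((j + a.+2).+1 - j.+2 = a.+1)%N by lia.
    have -> : ((j + a.+2).+3 - j.+2 = a.+3)%N by lia.
    have -> : (j.+2 - 2 = j)%N by lia.
    exact: coef_id_big.
Qed.

Fixpoint th (k : nat) : {poly R} :=
  match k with
  | 0 => 0
  | 1 => 1
  | k'.+2 => (1 + q ^+ k' *: 'X) * th k'
  end.

Lemma th_rec k : q ^+ k *: ('X * th k) = th k.+2 - th k.
Proof. by rewrite /= mulrDl mul1r -scalerAl addrC addKr. Qed.

Lemma th_even i : th i.*2 = 0.
Proof. by elim: i => [|i IH] //=; rewrite IH mulr0. Qed.

Definition Vc (m : nat) : {poly R} := \sum_(k < m.+1) cc m k *: th k.

Lemma Vc_rec m :
  Vc m.+2 = (1 + q ^+ m.+1) *: Vc m.+1 + q ^+ m *: ('X * Vc m).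
Proof.
have eX : q ^+ m *: ('X * Vc m) =
   \sum_(k < m.+1) (qbin m k * q ^+ 'C(m.+1 - k, 2)) *: th k.+2
 - \sum_(k < m.+1) (qbin m k * q ^+ 'C(m.+1 - k, 2)) *: th k.
  rewrite /Vc mulr_sumr scaler_sumr -sumrB; apply: eq_bigr => [[k hk]] _ /=.
  have [d em] : exists d, (m = k + d)%N by exists (m - k)%N; lia.
  rewrite -scalerAr scalerA mulrC em exprD.
  rewrite mulrDl mul1r -scalerAl scalerDr scalerA (addrC (_ *: th k)) addrK /cc.
  have -> : ((k + d).+1 - k = d.+1)%N by lia.
  have -> : (k + d - k = d)%N by lia.
  rewrite binS2 exprD; congr (_ *: _).
  by move: (q ^+ 'C(d, 2)) (q ^+ k) (q ^+ d) (qbin (k + d) k) => Z X Y B; ring.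
rewrite eX /Vc.
transitivity (\sum_(k < m.+3) ((1 + q ^+ m.+1) * cc m.+1 k
    + (if (2 <= k)%N then qbin m (k - 2) * q ^+ 'C(m.+3 - k, 2) else 0)
    - qbin m k * q ^+ 'C(m.+1 - k, 2)) *: th k).
  by apply: eq_bigr => [[k hk]] _ /=; rewrite coef_id.
rewrite (eq_bigr (fun k : 'I_m.+3 =>
   (1 + q ^+ m.+1) *: (cc m.+1 k *: th k)
   + (if (2 <= k)%N then qbin m (k - 2) * q ^+ 'C(m.+3 - k, 2) else 0) *: th k
   - (qbin m k * q ^+ 'C(m.+1 - k, 2)) *: th k)); last first.
  by move=> k _; rewrite scalerA !scalerDl scaleNr.
rewrite sumrB big_split /= -scaler_sumr.
rewrite [X in _ *: X](big_ord_recr m.+2) /= /cc (@qbin_gt m.+1 m.+2) // mul0r scale0r addr0.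
rewrite [X in _ + X - _]big_ord_recl [X in _ + (_ + X) - _]big_ord_recl /= !scale0r !add0r.
rewrite [X in _ - X]big_ord_recr [X in _ - (X + _)]big_ord_recr /=.
rewrite (@qbin_gt m m.+2) // (@qbin_gt m m.+1) // !mul0r !scale0r !addr0.
rewrite addrA; congr (_ + _ - _); apply: eq_bigr => [[k hk]] _ /=.
by rewrite /bump /= !add1n !subSS ?subn0.
Qed.

Lemma Upair_closed n : Upair 1 q n = (Vc n, Vc n.+1).
Proof.
elim: n => [|n IH].
  rewrite /= /Vc big_ord_recr big_ord0 /= big_ord_recr big_ord_recr big_ord0 /=.
  by rewrite /cc !scaler0 add0r qbin_nn mulr1 scale1r add0r.
rewrite /= IH Vc_rec mulr1 !mul_polyC -scalerAl.
by [].
Qed.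

Lemma U_Vc n : U 1 q n = Vc n.+1.
Proof. by rewrite /U Upair_closed. Qed.

Lemma Upair1_Vc n : (Upair 1 q n).1 = Vc n.
Proof. by rewrite Upair_closed. Qed.

Lemma sum_ext0 (V : zmodType) (F : nat -> V) a b : (a <= b)%N ->
  (forall i, (a <= i < b)%N -> F i = 0) ->
  \sum_(i < a) F i = \sum_(i < b) F i.
Proof.
move=> ab h; rewrite (big_ord_widen b F ab) big_mkcond; apply: eq_bigr => i _.
by case: ifPn => // hi; rewrite h // ltn_ord andbT; move: hi; rewrite -leqNgt.
Qed.

Lemma gauss N : \sum_(l < N.+2) (-1) ^+ l * qbin N.+1 l * q ^+ 'C(l, 2) = 0.
Proof.
rewrite big_ord_recl /= qbin_n0 expr0 !mul1r.
pose A (l : nat) : R := (-1) ^+ l * qbin N l * q ^+ 'C(l.+1, 2).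
rewrite (eq_bigr (fun l : 'I_N.+1 => A l.+1 - A l)); last first.
  move=> l _; rewrite /A (_ : bump 0 l = l.+1); last by rewrite /bump leq0n add1n.
  rewrite qbin_pascal (binS2 l.+1) (binS2 l) !exprD !exprS.
  by move: (q ^+ 'C(l, 2)) (q ^+ l) (qbin N l) (qbin N l.+1) ((-1) ^+ l) => Z X B C S; ring.
rewrite -(big_mkord xpredT (fun l => A l.+1 - A l)) telescope_sumr //.
rewrite /A qbin_gt // qbin_n0 mulr0 mul0r sub0r expr0 mul1r (_ : 'C(1,2) = 0)%N //.
rewrite (_ : 'C(0,2) = 0)%N // expr0.
by rewrite mulr1 subrr.
Qed.

Lemma inner_sum n i : (i <= n)%N ->
  \sum_(k < n.+1) (-1) ^+ k * qbin n k * cc k i = if i == n then (-1) ^+ n else 0.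
Proof.
move=> hin; have [d ->] : exists d, (n = i + d)%N by exists (n - i)%N; lia.
rewrite -addnS big_split_ord /= big1 ?add0r; last first.
  by move=> k _; rewrite /cc (@qbin_gt k i (ltn_ord k)) mul0r mulr0.
rewrite (eq_bigr (fun l : 'I_d.+1 => ((-1) ^+ i * qbin (i + d) i) *
     ((-1) ^+ l * qbin d l * q ^+ 'C(l, 2)))); last first.
  have e4 : forall a b c z : R, a * b * (c * z) = a * (b * c) * z by move=> *; ring.
  move=> l _; rewrite /cc /= e4 qbin_mul; [|lia|].
  2: by move: (ltn_ord l); lia.
  have -> : (i + d - i = d)%N by lia.
  have -> : (i + l - i = l)%N by lia.
  by rewrite exprD; move: (qbin (i+d) i) (qbin d l) ((-1) ^+ i) ((-1) ^+ l) => A B C D; ring.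
rewrite -mulr_sumr; case: d => [|d].
  by rewrite big_ord_recl big_ord0 /= addn0 eqxx qbin_nn qbin_n0 !mulr1 addr0 expr0 mulr1.
rewrite gauss mulr0; case: eqP => //; lia.
Qed.

Lemma Tsum n : \sum_(k < n.+1) ((-1) ^+ k * qbin n k) *: Vc k = (-1) ^+ n *: th n.
Proof.
transitivity (\sum_(k < n.+1) \sum_(i < n.+1) ((-1) ^+ k * qbin n k * cc k i) *: th i).
  apply: eq_bigr => k _; rewrite /Vc scaler_sumr.
  rewrite (@sum_ext0 _ (fun i => ((-1) ^+ k * qbin n k) *: (cc k i *: th i)) _ _ (ltn_ord k)).
    by apply: eq_bigr => i _; rewrite scalerA.
  by move=> i /andP [hi _]; rewrite /cc (@qbin_gt k i hi) mul0r scale0r scaler0.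
rewrite exchange_big /=.
transitivity (\sum_(i < n.+1) (if val i == n then (-1) ^+ n else 0) *: th i).
  apply: eq_bigr => i _; rewrite -scaler_suml; congr (_ *: _).
  by apply: inner_sum; rewrite -ltnS.
rewrite big_ord_recr /= eqxx big1 ?add0r // => i _.
by rewrite (_ : (val (widen_ord _ i) == n) = false) ?scale0r //; apply/eqP => /= h; move: (ltn_ord i); lia.
Qed.

Section LSpec.
Variable L : {poly R} -> R.
Hypothesis hL : lambda_spec q L.

Lemma L0 : L 0 = 0.
Proof.
have := hL.1 1 0 0; rewrite scale1r addr0 mul1r => h.
by apply: (addrI (L 0)); rewrite addr0 -h.
Qed.

Lemma LD p r : L (p + r) = L p + L r.
Proof. by have := hL.1 1 p r; rewrite scale1r mul1r. Qed.

Lemma LZ a p : L (a *: p) = a * L p.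
Proof. by rewrite -[a *: p]addr0 hL.1 L0 addr0. Qed.

Lemma LN p : L (- p) = - L p.
Proof. by rewrite -scaleN1r LZ mulN1r. Qed.

Lemma Lsum (I : finType) (F : I -> {poly R}) : L (\sum_i F i) = \sum_i L (F i).
Proof.
apply: (big_morph L LD L0).
Qed.

Lemma L_Vc_odd i : L (Vc i.*2.+1) = (i == 0%N)%:R.
Proof. by rewrite -U_Vc -muln2 mulnC hL.2. Qed.

Lemma even_part m : (0 < m)%N ->
  \sum_(k < m.*2.+1) (if odd k then 0 else qbin m.*2 k * L (Vc k)) = qint q m.*2.
Proof.
move=> m0.
have h := Tsum m.*2.
rewrite th_even in h.
have h2 := congr1 L h.
rewrite scaler0 L0 Lsum in h2.
have e : forall k : 'I_(m.*2).+1, L (((-1) ^+ k * qbin m.*2 k) *: Vc k) =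
   (if odd k then 0 else qbin m.*2 k * L (Vc k))
   - (if odd k then qbin m.*2 k * ((k : nat) == 1%N)%:R else 0).
  move=> k; rewrite LZ -signr_odd; case: (boolP (odd k)) => ok.
    rewrite expr1 sub0r mulN1r.
    rewrite -mulNr; congr (_ * _).
    have [i ei] : exists i, (k : nat) = i.*2.+1.
      by exists (k./2); rewrite -[in LHS](odd_double_half k) ok.
    rewrite ei L_Vc_odd; congr (_ %:R); apply/eqP/eqP; lia.
  by rewrite expr0 mul1r subr0.
rewrite (eq_bigr _ (fun k _ => e k)) sumrB in h2.
move/eqP: h2; rewrite subr_eq0 => /eqP ->.
have h1 : (1 < m.*2.+1)%N by rewrite ltnS -muln2; lia.
rewrite (bigD1 (Ordinal h1)) //= mulr1 big1 ?addr0 ?qbin_n1 // => k /eqP hk.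
case: ifP => // _; rewrite (_ : (k : nat) == 1%N = false) ?mulr0 //.
by apply/eqP => e1; apply: hk; apply: val_inj.
Qed.

End LSpec.

Lemma fps_div_seq_size (N D : nat -> R) n : size (fps_div_seq N D n) = n.
Proof. by elim: n => [|n IH] //=; rewrite size_rcons IH. Qed.

Lemma fps_div_seq_nth (N D : nat -> R) n i : (i < n)%N ->
  (fps_div_seq N D n)`_i = fps_div N D i.
Proof.
elim: n => [|n IH] // hi.
rewrite /fps_div; case: (ltngtP i n) hi => h hi.
- by rewrite /= nth_rcons fps_div_seq_size h IH.
- by move: hi; rewrite ltnS leqNgt h.
- by rewrite h.
Qed.

Lemma fps_div_rec (N D : nat -> R) n :
  fps_div N D n = (N n - \sum_(i < n) fps_div N D i * D (n - i)%N) / D 0%N.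
Proof.
rewrite /fps_div /= nth_rcons fps_div_seq_size ltnn eqxx.
congr ((_ - _) / _); apply: eq_bigr => i _.
by rewrite (@fps_div_seq_nth N D n i (ltn_ord i)).
Qed.

Lemma fps_div_unique (N D a : nat -> R) : D 0%N != 0 ->
  (forall n, \sum_(i < n.+1) a i * D (n - i)%N = N n) ->
  forall n, fps_div N D n = a n.
Proof.
move=> D0 h n; elim/ltn_ind: n => n IH.
rewrite fps_div_rec -(h n) big_ord_recr /= subnn.
rewrite [X in _ - X](eq_bigr (fun i : 'I_n => a i * D (n - i)%N)); last first.
  by move=> i _; rewrite IH.
by rewrite addrAC subrr add0r mulfK.
Qed.

Lemma genD_even k : ~~ odd k -> genD q k = 2 / qfact q k.
Proof. by move=> h; rewrite /genD -signr_odd (negbTE h) expr0. Qed.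

Lemma genD_odd k : odd k -> genD q k = 0.
Proof. by move=> h; rewrite /genD -signr_odd h expr1 addrN mul0r. Qed.

Section Conv.
Variable L : {poly R} -> R.
Hypothesis hL : lambda_spec q L.

Definition aa n := if odd n then 0 else L (Vc n) / qfact q n.

Lemma conv n : \sum_(i < n.+1) aa i * genD q (n - i)%N = genN q n.
Proof.
case: (boolP (odd n)) => on.
  rewrite big1.
    case: n on => [|n] //= on.
    by rewrite -signr_odd (negbTE on) expr0 subrr mul0r.
  move=> i _; rewrite /aa; case: ifP => oi; first by rewrite mul0r.
  rewrite genD_odd ?mulr0 // oddB; last by rewrite -ltnS.
  by rewrite on oi.
have [m em] : exists m, n = m.*2 by exists n./2; rewrite -[in LHS](odd_double_half n) (negbTE on).
subst n; case: m on => [|m] on.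
  rewrite big_ord_recl big_ord0 /aa /= /Vc big_ord_recl big_ord0 /= scaler0 addr0.
  by rewrite addr0 (L0 _ hL) mul0r mul0r.
rewrite (eq_bigr (fun i : 'I_(m.+1.*2).+1 => 2 / qfact q m.+1.*2 *
   (if odd i then 0 else qbin m.+1.*2 i * L (Vc i)))); last first.
  move=> i _; rewrite /aa; case: ifP => oi; first by rewrite mul0r mulr0.
  have hi : (i <= m.+1.*2)%N by rewrite -ltnS.
  rewrite genD_even; last by rewrite oddB // oi (negbTE on).
  rewrite /qbin hi.
  field; by rewrite !qfact_neq0.
rewrite -mulr_sumr (even_part _ hL) //.
rewrite /genN (_ : m.+1.*2 = (m.*2.+1).+1)%N; last by rewrite doubleS.
rewrite -signr_odd /= odd_double /= expr1 opprK (qfactS m.*2.+1).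
move: (qfact_neq0 m.*2.+1) (@qint_neq0 m.*2.+2 isT) => h1 h2.
field; by rewrite h1 h2.
Qed.

Lemma fps_aa n : fps_div (genN q) (genD q) n = aa n.
Proof.
apply: fps_div_unique; last exact: conv.
rewrite /genD expr0 qfact0 divr1 -(natrD _ 1 1) pnatr_eq0 //.
Qed.

End Conv.

Lemma Vc0 : Vc 0 = 0.
Proof. by rewrite /Vc big_ord_recl big_ord0 /= scaler0 addr0. Qed.

Lemma Vc1 : Vc 1 = 1.
Proof. by have := Upair_closed 0; rewrite /= => -[_ <-]. Qed.

Lemma vc_deg n :
  (forall i, (n <= i)%N -> (Vc n.*2)`_i = 0) /\
  (forall i, (n < i)%N -> (Vc n.*2.+1)`_i = 0) /\
  (Vc n.*2.+1)`_n != 0.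
Proof.
elim: n => [|n [IH1 [IH2 IH3]]].
  rewrite /= Vc0 Vc1; split => [i _|]; first by rewrite coef0.
  by split => [[|i] // _|]; rewrite coef1 /= ?oner_neq0.
have E1 : forall i, (n.+1 <= i)%N -> (Vc n.+1.*2)`_i = 0.
  move=> i hi; rewrite doubleS Vc_rec coefD !coefZ coefXM IH2 // mulr0 add0r.
  by case: i hi => [|i] //= hi; rewrite IH1 ?mulr0.
split => //; split.
  move=> i hi; rewrite doubleS Vc_rec coefD !coefZ coefXM E1 ?mulr0 ?add0r; last by lia.
  by case: i hi => [|i] //= hi; rewrite IH2 ?mulr0.
rewrite doubleS Vc_rec coefD !coefZ coefXM E1 // mulr0 add0r /=.
by rewrite mulf_neq0 // expf_neq0.
Qed.

Fixpoint mseq (n : nat) : seq R :=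
  match n with
  | 0 => [::]
  | n'.+1 => let s := mseq n' in
      rcons s (((n' == 0%N)%:R - \sum_(k < n') (Vc n'.*2.+1)`_k * s`_k)
               / (Vc n'.*2.+1)`_n')
  end.
Definition mom n := (mseq n.+1)`_n.

Lemma mseq_size n : size (mseq n) = n.
Proof. by elim: n => [|n IH] //=; rewrite size_rcons IH. Qed.

Lemma mseq_nth n i : (i < n)%N -> (mseq n)`_i = mom i.
Proof.
elim: n => [|n IH] // hi.
rewrite /mom; case: (ltngtP i n) hi => h hi.
- by rewrite /= nth_rcons mseq_size h IH.
- by move: hi; rewrite ltnS leqNgt h.
- by rewrite h.
Qed.

Lemma mom_rec n : mom n =
  ((n == 0%N)%:R - \sum_(k < n) (Vc n.*2.+1)`_k * mom k) / (Vc n.*2.+1)`_n.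
Proof.
rewrite /mom /= nth_rcons mseq_size ltnn eqxx.
congr ((_ - _) / _); apply: eq_bigr => i _.
by rewrite (@mseq_nth n i (ltn_ord i)).
Qed.

Definition Lfun (p : {poly R}) : R := \sum_(i < size p) p`_i * mom i.

Lemma Lfun_ext (p : {poly R}) N : (forall i, (N <= i)%N -> p`_i = 0) ->
  Lfun p = \sum_(i < N) p`_i * mom i.
Proof.
move=> h; rewrite /Lfun; case: (leqP (size p) N) => hs.
  apply: (@sum_ext0 _ (fun i => p`_i * mom i)) => // i /andP [hi _].
  by rewrite nth_default ?mul0r.
symmetry; apply: (@sum_ext0 _ (fun i => p`_i * mom i)); first exact: ltnW.
by move=> i /andP [hi _]; rewrite h ?mul0r.
Qed.

Lemma Lfun_spec : lambda_spec q Lfun.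
Proof.
split.
  move=> a p r.
  set N := maxn (size p) (size r).
  have hp : forall i, (N <= i)%N -> p`_i = 0.
    by move=> i hi; apply: nth_default; apply: leq_trans hi; apply: leq_maxl.
  have hr : forall i, (N <= i)%N -> r`_i = 0.
    by move=> i hi; apply: nth_default; apply: leq_trans hi; apply: leq_maxr.
  rewrite (Lfun_ext _ _ hp) (Lfun_ext _ _ hr) (@Lfun_ext _ N); last first.
    by move=> i hi; rewrite coefD coefZ hp ?hr ?mulr0 ?addr0.
  rewrite mulr_sumr -big_split; apply: eq_bigr => i _.
  by rewrite coefD coefZ mulrDl mulrA.
move=> n.
rewrite /U Upair_closed /= (_ : (2 * n).+1 = n.*2.+1)%N; last by rewrite -muln2 mulnC.
have [_ [h2 h3]] := vc_deg n.
rewrite (@Lfun_ext _ n.+1 h2) big_ord_recr /= mom_rec.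
field; exact: h3.
Qed.

Lemma L_exists : exists L : {poly R} -> R, lambda_spec q L.
Proof. by exists Lfun; exact: Lfun_spec. Qed.

Section BPart.
Variable L : {poly R} -> R.
Hypothesis hL : lambda_spec q L.

Definition codd n k := (-1) ^+ n * L ('X ^+ (n.+1 - k) * Vc k.*2).
Definition ceven n k := (-1) ^+ n * L ('X ^+ (n.+1 - k) * Vc k.*2.-1).

Lemma codd0 n : codd n 0 = 0.
Proof. by rewrite /codd double0 Vc0 mulr0 (L0 _ hL) mulr0. Qed.

Lemma ceven_top n : (1 <= n)%N -> ceven n n.+1 = 0.
Proof.
move=> hn; rewrite /ceven subnn expr0 mul1r doubleS -pred_Sn -U_Vc.
have -> : n.*2 = (2 * n)%N by rewrite -muln2 mulnC.
rewrite hL.2; case: n hn => // n _; by rewrite mulr0.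
Qed.

Lemma ceven01 : ceven 0 1 = 1.
Proof.
rewrite /ceven expr0 subnn expr0 !mul1r (_ : Vc (1.*2.-1) = U 1 q (2 * 0)).
  by rewrite hL.2.
by rewrite U_Vc.
Qed.


Lemma R1 n k : (1 <= k <= n.+1)%N ->
  codd n k = q ^+ (2 * k - 2) * codd n k.-1 + (1 + q ^+ (2 * k - 1)) * ceven n k.
Proof.
case: k => [|j] // /andP [_ hj].
rewrite /codd /ceven -pred_Sn doubleS -pred_Sn Vc_rec.
have -> : (2 * j.+1 - 2 = j.*2)%N by rewrite -muln2; lia.
have -> : (2 * j.+1 - 1 = j.*2.+1)%N by rewrite -muln2; lia.
have -> : (n.+1 - j = (n - j).+1)%N by lia.
rewrite subSS mulrDr -!scalerAr mulrA -exprSr.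
rewrite (LD _ hL) !(LZ _ hL).
set A := L (_ * Vc j.*2.+1); set B := L (_ * Vc j.*2).
by move: (q ^+ j.*2) (q ^+ j.*2.+1) ((-1) ^+ n : R) => X Y S; ring.
Qed.

Lemma R2 n k : (1 <= n)%N -> (1 <= k <= n)%N ->
  ceven n k = q ^ (1 - (2 * k)%N%:Z) * (ceven n k.+1 + (1 + q ^+ (2 * k)) * codd n.-1 k).
Proof.
case: n => [|n] // _; case: k => [|j] // /andP [_ hj].
have -> : (2 * j.+1 = (j.*2.+1).+1)%N by rewrite -muln2; lia.
rewrite intS opprD addNKr -exprnN /ceven /codd -pred_Sn.
have -> : (n.+2 - j.+1 = (n.+1 - j.+1).+1)%N by lia.
rewrite !doubleS -!pred_Sn Vc_rec (_ : (n.+2 - j.+2 = n.+1 - j.+1)%N) //.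
move: (n.+1 - j.+1)%N => d.
have e : forall (a b : R) (P Q : {poly R}),
    'X^d * (a *: P + b *: ('X * Q)) = a *: ('X^d * P) + b *: ('X^(d.+1) * Q).
  by move=> a b P Q; rewrite mulrDr -!scalerAr mulrA -exprSr.
rewrite e (LD _ hL) !(LZ _ hL) exprS.
set A := L (_ * Vc j.*2.+1); set B := L (_ * Vc j.*2.+2).
have hq : q ^+ j.*2.+1 != 0 by rewrite expf_neq0.
move: (q ^+ j.*2.+1) (q ^+ j.*2.+2) ((-1) ^+ n : R) hq => Y Z S hq.
by field.
Qed.

Lemma b_rows (b : nat -> nat -> R) :
  b 0%N 1%N = 1 ->
  (forall n : nat, b (2 * n).+1 0%N = 0) ->
  (forall n : nat, (1 <= n)%N -> b (2 * n)%N n.+1 = 0) ->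
  (forall n k : nat, (1 <= k <= n.+1)%N ->
     b (2 * n).+1 k = q ^+ (2 * k - 2) * b (2 * n).+1 k.-1
                      + (1 + q ^+ (2 * k - 1)) * b (2 * n)%N k) ->
  (forall n k : nat, (1 <= n)%N -> (1 <= k <= n)%N ->
     b (2 * n)%N k = q ^ (1 - (2 * k)%N%:Z)
                     * (b (2 * n)%N k.+1 + (1 + q ^+ (2 * k)) * b (2 * n).-1 k)) ->
  forall n, (forall k, (1 <= k <= n.+1)%N -> b (2 * n)%N k = ceven n k) /\
            (forall k, (k <= n.+1)%N -> b (2 * n).+1 k = codd n k).
Proof.
move=> h01 hb0 htop hR1 hR2.
have odd_row : forall n, (forall k, (1 <= k <= n.+1)%N -> b (2 * n)%N k = ceven n k) ->
    (forall k, (k <= n.+1)%N -> b (2 * n).+1 k = codd n k).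
  move=> n hev; elim=> [|k IH] hk; first by rewrite hb0 codd0.
  have hk' : (1 <= k.+1 <= n.+1)%N by rewrite hk.
  rewrite hR1 // R1 // -pred_Sn IH ?hev //; exact: ltnW.
elim=> [|n [IHe IHo]].
  have hev : forall k, (1 <= k <= 1)%N -> b (2 * 0)%N k = ceven 0 k.
    move=> k hk; have -> : k = 1%N by lia.
    by rewrite muln0 h01 ceven01.
  by split => //; apply: odd_row.
suff hev : forall k, (1 <= k <= n.+2)%N -> b (2 * n.+1)%N k = ceven n.+1 k.
  by split => //; apply: odd_row.
have key : forall d, (d <= n.+1)%N -> b (2 * n.+1)%N (n.+2 - d)%N = ceven n.+1 (n.+2 - d)%N.
  elim=> [|d IH] hd.
    by rewrite subn0 htop // ceven_top.
  have hk : (1 <= n.+2 - d.+1 <= n.+1)%N by lia.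
  rewrite hR2 // R2 // -pred_Sn.
  have -> : ((n.+2 - d.+1).+1 = n.+2 - d)%N by lia.
  have -> : ((2 * n.+1).-1 = (2 * n).+1)%N by lia.
  rewrite IH ?IHo //; lia.
move=> k hk; have -> : k = (n.+2 - (n.+2 - k)%N)%N by lia.
apply: key; lia.
Qed.
End BPart.

Lemma final_part (b : nat -> nat -> R) :
  b 0%N 1%N = 1 ->
  (forall n : nat, b (2 * n).+1 0%N = 0) ->
  (forall n : nat, (1 <= n)%N -> b (2 * n)%N n.+1 = 0) ->
  (forall n k : nat, (1 <= k <= n.+1)%N ->
     b (2 * n).+1 k = q ^+ (2 * k - 2) * b (2 * n).+1 k.-1
                      + (1 + q ^+ (2 * k - 1)) * b (2 * n)%N k) ->
  (forall n k : nat, (1 <= n)%N -> (1 <= k <= n)%N ->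
     b (2 * n)%N k = q ^ (1 - (2 * k)%N%:Z)
                     * (b (2 * n)%N k.+1 + (1 + q ^+ (2 * k)) * b (2 * n).-1 k)) ->
  (exists L : {poly R} -> R, lambda_spec q L) /\
  (forall L : {poly R} -> R, lambda_spec q L ->
     forall n : nat, (1 <= n)%N ->
       b (2 * n).-1 n = L ((-1) ^+ n.-1 *: U 1 q (2 * n).-1) /\
       L ((-1) ^+ n.-1 *: U 1 q (2 * n).-1)
         = qpochneg q (2 * n).-1 * qGenocchi q n).
Proof.
move=> h01 hb0 htop hR1 hR2; split; first exact: L_exists.
move=> L hL [|m] // _.
have [_ ho] := b_rows _ hL _ h01 hb0 htop hR1 hR2 m.
have e1 : ((2 * m.+1).-1 = (2 * m).+1)%N by lia.
have e2 : ((2 * m).+2 = m.+1.*2)%N by rewrite -muln2; lia.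
have eU : L ((-1) ^+ m.+1.-1 *: U 1 q (2 * m.+1).-1) = (-1) ^+ m * L (Vc m.+1.*2).
  by rewrite (LZ _ hL) e1 U_Vc e2.
split.
  by rewrite eU e1 ho // /codd subnn expr0 mul1r.
rewrite eU /qGenocchi (fps_aa _ hL) /aa.
have -> : (2 * m.+1 = m.+1.*2)%N by rewrite -muln2 mulnC.
rewrite odd_double -pred_Sn.
have h1 := qfact_neq0 m.+1.*2; have h2 := qpochneg_neq0 (m.+1.*2).-1.
by field; rewrite h1 h2.
Qed.

End Basics.

Theorem theorem3p6 (R : realFieldType) (q : R) (b : nat -> nat -> R) :
  q != 0 -> q != -1 ->
  b 0%N 1%N = 1 ->
  (forall n : nat, b (2 * n).+1 0%N = 0) ->
  (forall n : nat, (1 <= n)%N -> b (2 * n)%N n.+1 = 0) ->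
  (forall n k : nat, (1 <= k <= n.+1)%N ->
     b (2 * n).+1 k = q ^+ (2 * k - 2) * b (2 * n).+1 k.-1
                      + (1 + q ^+ (2 * k - 1)) * b (2 * n)%N k) ->
  (forall n k : nat, (1 <= n)%N -> (1 <= k <= n)%N ->
     b (2 * n)%N k = q ^ (1 - (2 * k)%N%:Z)
                     * (b (2 * n)%N k.+1 + (1 + q ^+ (2 * k)) * b (2 * n).-1 k)) ->
  (exists L : {poly R} -> R, lambda_spec q L) /\
  (forall L : {poly R} -> R, lambda_spec q L ->
     forall n : nat, (1 <= n)%N ->
       b (2 * n).-1 n = L ((-1) ^+ n.-1 *: U 1 q (2 * n).-1) /\
       L ((-1) ^+ n.-1 *: U 1 q (2 * n).-1)
         = qpochneg q (2 * n).-1 * qGenocchi q n).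
Proof.
move=> q0 qm1; exact: (@final_part R q q0 qm1 b).
Qed.
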